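(* Let $(E_1,E_2)$ be a matched pair of Courant algebroids, both of split signature, with connections $\nabla^{\to}$ ($E_1$-connection on $E_2$) and $\nabla^{\leftarrow}$ ($E_2$-connection on $E_1$), and let $D_1\subset E_1$, $D_2\subset E_2$ be Dirac structures. Then $D_1\oplus D_2$ is a Dirac structure in the matched sum $E_1\oplus E_2$ if and only if $\nabla^{\leftarrow}_\alpha a\in\Gamma(D_1)$ and $\nabla^{\to}_a\alpha\in\Gamma(D_2)$ for all $\alpha\in\Gamma(D_2)$ and $a\in\Gamma(D_1)$.
   Context: A Courant algebroid $(E,\langle\cdot,\cdot\rangle,\rho,\diamond)$: real vector bundle with symmetric nondegenerate fiberwise form, bracket and anchor satisfying (J) $\phi\diamond(\phi_1\diamond\phi_2)=\phi_1\diamond(\phi\diamond\phi_2)+(\phi\diamond\phi_1)\diamond\phi_2$, (L) $\phi\diamond(f\phi')=(\rho(\phi)f)\phi'+f(\phi\diamond\phi')$, (S) $\phi\diamond\phi=\tfrac12 D\langle\phi,\phi\rangle$, (I) $\rho(\phi)\langle\phi',\phi'\rangle=2\langle\phi\diamond\phi',\phi'\rangle$, with $\langle Df,\phi\rangle=\rho(\phi)f$. A Dirac structure in a Courant algebroid of split signature is a maximal isotropic subbundle $D$ with $\Gamma(D)\diamond\Gamma(D)\subset\Gamma(D)$. A matched pair $(E_1,E_2)$: metric-preserving connections $\nabla^{\to}$, $\nabla^{\leftarrow}$ with $\nabla^{\to}_{D_1f}=0$, $\nabla^{\leftarrow}_{D_2f}=0$ such that $E_1\oplus E_2$ with pairing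 $\langle a,b\rangle_1+\langle\alpha,\beta\rangle_2$, anchor $\rho_1(a)+\rho_2(\alpha)$ and bracket $(a\oplus\alpha)\diamond(b\oplus\beta)=(a\diamond_1b+\nabla^{\leftarrow}_\alpha b-\nabla^{\leftarrow}_\beta a+\mho(\alpha,\beta)+\tfrac12D_1\langle\alpha,\beta\rangle_2)\oplus(\alpha\diamond_2\beta+\nabla^{\to}_a\beta-\nabla^{\to}_b\alpha+\Omega(a,b)+\tfrac12D_2\langle a,b\rangle_1)$ is a Courant algebroid (the matched sum), where $\langle\gamma,\Omega(a,b)\rangle_2=\tfrac12(\langle\nabla^{\leftarrow}_\gamma a,b\rangle_1-\langle a,\nabla^{\leftarrow}_\gamma b\rangle_1)$ and $\langle c,\mho(\alpha,\beta)\rangle_1=\tfrac12(\langle\nabla^{\to}_c\alpha,\beta\rangle_2-\langle\alpha,\nabla^{\to}_c\beta\rangle_2)$. *)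

(* Defs.v *)
(* Section-level (algebraic) model of Courant algebroids:
   F plays the role of C^oo(M) (a commutative ring in which 2 is invertible),
   an lmodType F plays the role of the C^oo(M)-module Gamma(E) of sections. *)
From HB Require Import structures.
From mathcomp Require Import all_boot all_order all_algebra.
Set Implicit Arguments. Unset Strict Implicit. Unset Printing Implicit Defensive.
Import Order.TTheory GRing.Theory Num.Theory.
Local Open Scope ring_scope.

Section CourantDefs.
Variable F : comUnitRingType.

Definition is_courant (E : lmodType F) (pair : E -> E -> F) (anchor : E -> F -> F)
    (Dop : F -> E) (br : E -> E -> E) : Prop :=
  (forall x y, pair x y = pair y x) /\
      (forall (f : F) x y z, pair (f *: x + y) z = f * pair x z + pair y z) /\
      (forall x, (forall y, pair x y = 0) -> x = 0) /\
      (forall (f g : F) x y, anchor (f *: x + y) g = f * anchor x g + anchor y g) /\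
      (forall x (f g : F), anchor x (f + g) = anchor x f + anchor x g
                        /\ anchor x (f * g) = anchor x f * g + f * anchor x g) /\
      (forall (f : F) x, pair (Dop f) x = anchor x f) /\
      (forall x y z, br (x + y) z = br x z + br y z /\ br z (x + y) = br z x + br z y) /\
      (forall x y z, br x (br y z) = br y (br x z) + br (br x y) z) /\
      (forall x (f : F) y, br x (f *: y) = anchor x f *: y + f *: br x y) /\
      (forall x, br x x = (2%:R)^-1 *: Dop (pair x x)) /\
      (forall x y, anchor x (pair y y) = 2%:R * pair (br x y) y).

(* Gamma(S) for a subbundle S: a C^oo-submodule of sections. *)
Definition is_submodule (E : lmodType F) (S : E -> Prop) : Prop :=
  [/\ S 0, (forall x y, S x -> S y -> S (x + y)) & (forall (f : F) x, S x -> S (f *: x))].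

Definition is_lagrangian (E : lmodType F) (pair : E -> E -> F) (S : E -> Prop) : Prop :=
  [/\ is_submodule S,
      (forall x y, S x -> S y -> pair x y = 0) &
      (forall x, (forall y, S y -> pair x y = 0) -> S x)].

(* Split signature: section-level proxy (existence of a Lagrangian). *)
Definition split_signature (E : lmodType F) (pair : E -> E -> F) : Prop :=
  exists S : E -> Prop, is_lagrangian pair S.

Definition is_dirac (E : lmodType F) (pair : E -> E -> F) (br : E -> E -> E)
    (S : E -> Prop) : Prop :=
  is_lagrangian pair S /\ (forall x y, S x -> S y -> S (br x y)).

Definition is_metric_connection (E1 E2 : lmodType F) (anchor1 : E1 -> F -> F)
    (pair2 : E2 -> E2 -> F) (nabla : E1 -> E2 -> E2) : Prop :=
  [/\ (forall (f : F) a b al, nabla (f *: a + b) al = f *: nabla a al + nabla b al),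
      (forall a al be, nabla a (al + be) = nabla a al + nabla a be),
      (forall a (f : F) al, nabla a (f *: al) = anchor1 a f *: al + f *: nabla a al) &
      (forall a al be, anchor1 a (pair2 al be) = pair2 (nabla a al) be + pair2 al (nabla a be))].

Definition msum_pair (E1 E2 : lmodType F) (p1 : E1 -> E1 -> F) (p2 : E2 -> E2 -> F)
    (x y : E1 * E2) : F := p1 x.1 y.1 + p2 x.2 y.2.

Definition msum_anchor (E1 E2 : lmodType F) (r1 : E1 -> F -> F) (r2 : E2 -> F -> F)
    (x : E1 * E2) (f : F) : F := r1 x.1 f + r2 x.2 f.

Definition msum_D (E1 E2 : lmodType F) (D1 : F -> E1) (D2 : F -> E2) (f : F) : E1 * E2 :=
  (D1 f, D2 f).

Definition msum_bracket (E1 E2 : lmodType F)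
    (p1 : E1 -> E1 -> F) (p2 : E2 -> E2 -> F) (D1 : F -> E1) (D2 : F -> E2)
    (br1 : E1 -> E1 -> E1) (br2 : E2 -> E2 -> E2)
    (nto : E1 -> E2 -> E2) (nfrom : E2 -> E1 -> E1)
    (Omega : E1 -> E1 -> E2) (Mho : E2 -> E2 -> E1)
    (x y : E1 * E2) : E1 * E2 :=
  let: (a, al) := x in let: (b, be) := y in
  (br1 a b + nfrom al b - nfrom be a + Mho al be + (2%:R)^-1 *: D1 (p2 al be),
   br2 al be + nto a be - nto b al + Omega a b + (2%:R)^-1 *: D2 (p1 a b)).

Definition is_matched_pair (E1 E2 : lmodType F)
    (p1 : E1 -> E1 -> F) (r1 : E1 -> F -> F) (D1 : F -> E1) (br1 : E1 -> E1 -> E1)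
    (p2 : E2 -> E2 -> F) (r2 : E2 -> F -> F) (D2 : F -> E2) (br2 : E2 -> E2 -> E2)
    (nto : E1 -> E2 -> E2) (nfrom : E2 -> E1 -> E1)
    (Omega : E1 -> E1 -> E2) (Mho : E2 -> E2 -> E1) : Prop :=
  is_metric_connection r1 p2 nto /\
      is_metric_connection r2 p1 nfrom /\
      (forall (f : F) al, nto (D1 f) al = 0) /\
      (forall (f : F) a, nfrom (D2 f) a = 0) /\
      (forall a b ga, p2 ga (Omega a b) = (2%:R)^-1 * (p1 (nfrom ga a) b - p1 a (nfrom ga b))) /\
      (forall al be c, p1 c (Mho al be) = (2%:R)^-1 * (p2 (nto c al) be - p2 al (nto c be))) /\
      is_courant (msum_pair p1 p2) (msum_anchor r1 r2) (msum_D D1 D2)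
        (msum_bracket p1 p2 D1 D2 br1 br2 nto nfrom Omega Mho).

End CourantDefs.

(* Main.v *)
Require Import Defs.
From HB Require Import structures.
From mathcomp Require Import all_boot all_order all_algebra.
Import GRing.Theory.
Local Open Scope ring_scope.
Set Implicit Arguments. Unset Strict Implicit.

Section Helpers.
Variable F : comUnitRingType.

Lemma add_zero_gen (M : zmodType) (N : zmodType) (gg : M -> N) :
  (forall x y, gg (x + y) = gg x + gg y) -> gg 0 = 0.
Proof. move=> H; apply/eqP; rewrite -(subrr (gg 0)) -{2}(addr0 0) H addrK //. Qed.

Lemma pair0l (E : lmodType F) (p : E -> E -> F) :
  (forall (f : F) x y z, p (f *: x + y) z = f * p x z + p y z) ->
  forall z, p 0 z = 0.
Proof.
move=> H z; apply: (@add_zero_gen _ _ (fun x => p x z)) => x y.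
by rewrite -{1}(scale1r x) H mul1r.
Qed.

Lemma pair0r (E : lmodType F) (p : E -> E -> F) :
  (forall x y, p x y = p y x) ->
  (forall (f : F) x y z, p (f *: x + y) z = f * p x z + p y z) ->
  forall z, p z 0 = 0.
Proof. by move=> Hs H z; rewrite Hs (pair0l H). Qed.

Lemma nondeg0 (E : lmodType F) (p : E -> E -> F) :
  (forall x, (forall y, p x y = 0) -> x = 0) -> forall x,
  (forall y, p y x = 0) -> (forall x y, p x y = p y x) -> x = 0.
Proof. by move=> Hn x H Hs; apply: Hn => y; rewrite Hs. Qed.

Lemma D0 (E : lmodType F) (p : E -> E -> F) r Dop br :
  is_courant p r Dop br -> Dop 0 = 0.
Proof.
move=> [Hs [Hb [Hn [_ [Hr [HD _]]]]]].
apply: Hn => y; rewrite HD.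
by apply: (@add_zero_gen _ _ (r y)) => f g; case: (Hr y f g).
Qed.

Lemma sub_mem (E : lmodType F) (S : E -> Prop) :
  is_submodule S -> forall x y, S x -> S y -> S (x - y).
Proof.
move=> [S0 SD SZ] x y Sx Sy; apply: SD => //.
by rewrite -scaleN1r; apply: SZ.
Qed.
End Helpers.

Unset Implicit Arguments.
Theorem mainTheorem13 (F : comUnitRingType) (two_unit : (2%:R : F) \is a GRing.unit)
    (E1 E2 : lmodType F)
    (p1 : E1 -> E1 -> F) (r1 : E1 -> F -> F) (D1 : F -> E1) (br1 : E1 -> E1 -> E1)
    (p2 : E2 -> E2 -> F) (r2 : E2 -> F -> F) (D2 : F -> E2) (br2 : E2 -> E2 -> E2)
    (nto : E1 -> E2 -> E2) (nfrom : E2 -> E1 -> E1)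
    (Omega : E1 -> E1 -> E2) (Mho : E2 -> E2 -> E1)
    (HC1 : is_courant p1 r1 D1 br1) (HC2 : is_courant p2 r2 D2 br2)
    (Hsplit1 : split_signature p1) (Hsplit2 : split_signature p2)
    (Hmp : is_matched_pair p1 r1 D1 br1 p2 r2 D2 br2 nto nfrom Omega Mho)
    (Dir1 : E1 -> Prop) (Dir2 : E2 -> Prop)
    (HD1 : is_dirac p1 br1 Dir1) (HD2 : is_dirac p2 br2 Dir2) :
  is_dirac (msum_pair p1 p2) (msum_bracket p1 p2 D1 D2 br1 br2 nto nfrom Omega Mho)
           (fun x : E1 * E2 => Dir1 x.1 /\ Dir2 x.2)
  <-> (forall (al : E2) (a : E1), Dir2 al -> Dir1 a -> Dir1 (nfrom al a) /\ Dir2 (nto a al)).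
Proof.
have D10 := D0 HC1; have D20 := D0 HC2.
move: HC1 HC2 => [Hs1 [Hb1 [Hn1 [_ [_ [_ [Hbr1 _]]]]]]] [Hs2 [Hb2 [Hn2 [_ [_ [_ [Hbr2 _]]]]]]].
move: Hmp => [[_ Hto _ _] [[_ Hfrom _ _] [_ [_ [HOm [HMho _]]]]]].
have p1l := pair0l Hb1; have p1r := pair0r Hs1 Hb1.
have p2l := pair0l Hb2; have p2r := pair0r Hs2 Hb2.
have nto0 a : nto a 0 = 0 by apply: add_zero_gen => x y; apply: Hto.
have nfrom0 a : nfrom a 0 = 0 by apply: add_zero_gen => x y; apply: Hfrom.
have br10 a : br1 0 a = 0 by apply: (@add_zero_gen _ _ (br1^~ a)) => x y; case: (Hbr1 x y a).
have br20 a : br2 a 0 = 0 by apply: add_zero_gen => x y; case: (Hbr2 x y a).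
move: HD1 HD2 => [[Sub1 Iso1 Max1] Br1] [[Sub2 Iso2 Max2] Br2].
have S10 : Dir1 0 by case: Sub1.
have S20 : Dir2 0 by case: Sub2.
split.
- move=> [_ HB] al a H2 H1.
  have := HB (0, al) (a, 0) (conj S10 H2) (conj H1 S20).
  rewrite /msum_bracket /= => -[].
  have M0 : Mho al 0 = 0.
    apply: (nondeg0 Hn1) => // y; rewrite HMho nto0 !p2r subrr mulr0 //.
  have O0 : Omega 0 a = 0.
    apply: (nondeg0 Hn2) => // y; rewrite HOm nfrom0 !p1l subrr mulr0 //.
  rewrite br10 br20 nfrom0 nto0 M0 O0 p2r p1l D10 D20 !scaler0 !addr0 !subr0 !add0r.
  move=> A B; split => //.
  by rewrite -(opprK (nto a al)) -scaleN1r; case: Sub2 => _ _ Z; apply: Z.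
- move=> H; split.
  + split.
    * case: Sub1 => [_ S1D S1Z]; case: Sub2 => [_ S2D S2Z].
      split => //=.
      - by move=> x y [? ?] [? ?]; split; [apply: (S1D)|apply: (S2D)].
      - by move=> f x [? ?]; split; [apply: S1Z|apply: S2Z].
    * by move=> x y [? ?] [? ?]; rewrite /msum_pair Iso1 // Iso2 // addr0.
    * move=> [x1 x2] Hx; split => /=.
      - apply: Max1 => y Hy; have := Hx (y, 0) (conj Hy S20).
        by rewrite /msum_pair /= p2r addr0.
      - apply: Max2 => y Hy; have := Hx (0, y) (conj S10 Hy).
        by rewrite /msum_pair /= p1r add0r.
  + move=> [a al] [b be] [Ha Hal] [Hb Hbe]; rewrite /msum_bracket /=.
    have S1 := Sub1; have S2 := Sub2.
    case: Sub1 => [_ S1D S1Z]; case: Sub2 => [_ S2D S2Z].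
    rewrite (Iso2 _ _ Hal Hbe) (Iso1 _ _ Ha Hb) D10 D20 !scaler0 !addr0.
    split.
    * apply: (S1D); [apply: (sub_mem S1); [apply: (S1D)|]|].
      - exact: Br1.
      - by case: (H al b Hal Hb).
      - by case: (H be a Hbe Ha).
      - apply: Max1 => c Hc; rewrite Hs1 HMho.
        case: (H al c Hal Hc) => _ X1; case: (H be c Hbe Hc) => _ X2.
        by rewrite (Iso2 _ _ X1 Hbe) (Iso2 _ _ Hal X2) subrr mulr0.
    * apply: (S2D); [apply: (sub_mem S2); [apply: (S2D)|]|].
      - exact: Br2.
      - by case: (H be a Hbe Ha).
      - by case: (H al b Hal Hb).
      - apply: Max2 => c Hc; rewrite Hs2 HOm.
        case: (H c a Hc Ha) => X1 _; case: (H c b Hc Hb) => X2 _.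
        by rewrite (Iso1 _ _ X1 Hb) (Iso1 _ _ Ha X2) subrr mulr0.
Qed.
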